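(* Let $d_1,\dots,d_n$ be positive integers and let $b,a_1,\dots,a_n\in\mathbb{F}_q^*$. Let $$N^*=\#\{(x_1,\dots,x_n)\in(\mathbb{F}_q^* )^n : a_1x_1^{d_1}+\cdots+a_nx_n^{d_n}=b\}.$$ Then $$\left|N^*-\frac1q\big[(q-1)^n-(-1)^n\big]\right|\le\sum_{e=0}^{n-1}\ \sum_{1\le i_{e+1}<i_{e+2}<\cdots<i_n\le n}\ \prod_{j=e+1}^n(d_{i_j}-1)\,\sqrt q^{\,n-e-1}.$$ *)

(* Defs.v *)
From mathcomp Require Import all_boot all_order all_algebra all_field.
Set Implicit Arguments. Unset Strict Implicit. Unset Printing Implicit Defensive.
Import Order.TTheory GRing.Theory Num.Theory.
Local Open Scope ring_scope.

Definition Nstar (F : finFieldType) (n : nat) (d : 'I_n -> nat) (a : 'I_n -> F) (b : F) : nat :=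
  #|[set x : {ffun 'I_n -> F} | [forall i, x i != 0] &&
       (\sum_(i < n) a i * x i ^+ d i == b)]|.

(* Main.v *)
Require Import Defs.
From mathcomp Require Import all_boot all_order all_algebra all_solvable all_field.
From mathcomp Require Import complex.
From mathcomp Require Import ring zify.
Set Implicit Arguments. Unset Strict Implicit. Unset Printing Implicit Defensive.
Import Order.TTheory GRing.Theory Num.Theory.
Local Open Scope ring_scope.

Section Roots.
Variable R : rcfType.
Local Notation C := (R[i]).

Lemma Cprim (n : nat) : (0 < n)%N -> {z : C | n.-primitive_root z}.
Proof.
pose p : {poly C} := 'X^n - 1; have [r Dp] := closed_field_poly_normal p.
move=> n_gt0; apply/sigW; rewrite (monicP _) ?monicXnsubC // scale1r in Dp.
have rn1: all n.-unity_root r by apply/allP=> z; rewrite -root_prod_XsubC -Dp.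
have sz_r: (n < (size r).+1)%N.
  by rewrite -(size_prod_XsubC r id) -Dp size_XnsubC.
have [|z] := hasP (has_prim_root n_gt0 rn1 _ sz_r); last by exists z.
by rewrite -separable_prod_XsubC -Dp separable_Xn_sub_1 // pnatr_eq0 -lt0n.
Qed.
End Roots.

Section FRoots.
Variable F : finFieldType.
Lemma Fprim : {g : F | (#|F|.-1).-primitive_root g}.
Proof.
have m_gt0 : (0 < #|F|.-1)%N by rewrite -ltnS prednK ?finNzRing_gt1 // ltnW ?finNzRing_gt1.
apply/sigW.
have H1 : all (#|F|.-1).-unity_root (enum (predC1 (0%R:F))).
  apply/allP => x; rewrite mem_enum /= => x0.
  rewrite unity_rootE; apply/eqP; apply: (mulIf x0); rewrite mul1r -exprSr.
  by rewrite prednK ?expf_card // ltnW ?finNzRing_gt1.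
have H2 : (#|F|.-1 <= size (enum (predC1 (0%R:F))))%N by rewrite -cardE cardC1.
have [z _ zp] := hasP (@has_prim_root F _ (enum (predC1 (0%R:F))) m_gt0 H1 (enum_uniq _) H2).
by exists z.
Qed.
End FRoots.

Section Gauss.
Variable R : rcfType.
Variable F : finFieldType.
Local Notation C := (R[i]).
Local Notation q := #|F|.

Variable psi : F -> C.
Hypothesis psiD : forall x y, psi (x + y) = psi x * psi y.
Hypothesis psiN : forall x, `|psi x| = 1.
Variable x0 : F.
Hypothesis psi_nt : psi x0 != 1.

Lemma norm1_conj (z : C) : `|z| = 1 -> z^* = z^-1.
Proof. by move=> h; rewrite invC_norm h expr1n invr1 mul1r. Qed.

Lemma norm1_neq0 (z : C) : `|z| = 1 -> z != 0.
Proof. by move=> h; apply/eqP => z0; move: h; rewrite z0 normr0 => /eqP; rewrite eq_sym oner_eq0. Qed.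

Lemma psi0 : psi 0 = 1.
Proof.
have h := psiD 0 0; rewrite addr0 in h.
have nz := norm1_neq0 (psiN 0).
by apply: (mulfI nz); rewrite -h mulr1.
Qed.

Lemma psiNeg x : psi (- x) = (psi x)^-1.
Proof.
have nz := norm1_neq0 (psiN x).
by apply: (mulfI nz); rewrite -psiD subrr psi0 divff.
Qed.

Lemma psi_conj x : (psi x)^* = psi (- x).
Proof. by rewrite norm1_conj // psiNeg. Qed.

Lemma psi_sum_all (w : F) : \sum_(y : F) psi (w * y) = if w == 0 then q%:R else 0.
Proof.
have [->|w0] := eqVneq w 0.
  by under eq_bigr do rewrite mul0r psi0; rewrite sumr_const.
rewrite (reindex_inj (mulfI (invr_neq0 w0))) /=.
under eq_bigr do rewrite mulrA divff // mul1r.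
set S := \sum_y psi y.
have : psi x0 * S = S.
  rewrite /S mulr_sumr [RHS](reindex_inj (addrI x0)) /=.
  by apply: eq_bigr => y _; rewrite psiD.
move/eqP; rewrite -subr_eq0 -{2}[S]mul1r -mulrBl mulf_eq0 subr_eq0 (negbTE psi_nt) /=.
by move/eqP.
Qed.

Lemma psi_sum_nz (w : F) : w != 0 -> \sum_(y | y != 0) psi (w * y) = -1.
Proof.
move=> w0; have := psi_sum_all w; rewrite (negbTE w0) (bigD1 0) //= mulr0 psi0.
by move/eqP; rewrite addrC addr_eq0 => /eqP.
Qed.

Section Char.
Variable u : F -> C.
Hypothesis uM : forall x y, x != 0 -> y != 0 -> u (x * y) = u x * u y.
Hypothesis uN : forall x, x != 0 -> `|u x| = 1.

Lemma u1 : u 1 = 1.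
Proof.
have nz := norm1_neq0 (uN (oner_neq0 F)).
by apply: (mulfI nz); rewrite -uM ?oner_neq0 // !mulr1.
Qed.

Lemma u_sum0 (t0 : F) : t0 != 0 -> u t0 != 1 -> \sum_(x | x != 0) u x = 0.
Proof.
move=> t00 ut0; set S := \sum_(x | x != 0) u x.
have : u t0 * S = S.
  rewrite /S mulr_sumr [RHS](reindex_inj (mulfI t00)) /=.
  apply: eq_big => [y|y y0]; first by rewrite mulf_eq0 (negbTE t00).
  by rewrite uM.
move/eqP; rewrite -subr_eq0 -{2}[S]mul1r -mulrBl mulf_eq0 subr_eq0 (negbTE ut0) /=.
by move/eqP.
Qed.

Definition gs (z : F) := \sum_(x | x != 0) u x * psi (z * x).

Lemma gs_scale (c z : F) : c != 0 -> u c * gs (c * z) = gs z.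
Proof.
move=> c0; rewrite /gs mulr_sumr [RHS](reindex_inj (mulfI c0)) /=.
apply: eq_big => [y|y y0]; first by rewrite mulf_eq0 (negbTE c0).
by rewrite uM // mulrA; congr (_ * psi _); rewrite mulrCA mulrA.
Qed.

Lemma u_conj x : x != 0 -> (u x)^* = (u x)^-1.
Proof. by move=> x0'; rewrite norm1_conj ?uN. Qed.

Lemma uV x : x != 0 -> u (x^-1) = (u x)^-1.
Proof.
move=> xn0; have nz := norm1_neq0 (uN xn0).
by apply: (mulfI nz); rewrite -uM ?invr_eq0 // divff // u1 divff.
Qed.

Lemma gs_norm2 (z t0 : F) : z != 0 -> t0 != 0 -> u t0 != 1 -> gs z * (gs z)^* = q%:R.
Proof.
move=> z0 t00 ut0.
rewrite /gs rmorph_sum /= big_distrlr /=.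
rewrite exchange_big /=.
(* for each y, substitute x = t * y *)
transitivity (\sum_(y | y != 0) \sum_(t | t != 0) u t * psi ((z * y) * (t - 1))).
  apply: eq_bigr => y y0.
  rewrite (reindex_inj (mulIf y0)) /=.
  apply: eq_big => [t|t]; first by rewrite mulf_eq0 (negbTE y0) orbF.
  rewrite mulf_eq0 (negbTE y0) orbF => t0'.
  rewrite rmorphM /= u_conj // psi_conj uM //.
  have nz := norm1_neq0 (uN y0).
  have -> : z * y * (t - 1) = z * (t * y) + - (z * y) by ring.
  rewrite psiD; field; exact: nz.
rewrite exchange_big /=.
transitivity (\sum_(t | t != 0) u t * (if t == 1 then (q.-1)%:R else -1)).
  apply: eq_bigr => t t0'; rewrite -mulr_sumr; congr (_ * _).
  have [->|t1] := eqVneq t 1.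
    under eq_bigr do rewrite subrr mulr0 psi0.
    by rewrite sumr_const -(cardC1 (0:F)); congr (_%:R); apply: eq_card.
  under eq_bigr do rewrite mulrC mulrA.
  apply: psi_sum_nz; by rewrite mulf_eq0 subr_eq0 (negbTE t1) (negbTE z0).
rewrite (bigD1 1) ?oner_neq0 //= eqxx u1 mul1r.
rewrite (eq_bigr (fun t => - u t)); last first.
  by move=> t /andP[_ /negbTE ->]; rewrite mulrN1.
rewrite sumrN.
have : \sum_(i | (i != 0) && (i != 1)) u i = - 1.
  have := u_sum0 t00 ut0; rewrite (bigD1 1) ?oner_neq0 //= u1.
  by move/eqP; rewrite addrC addr_eq0 => /eqP.
move=> ->; rewrite opprK natr1 prednK //.
by apply: (ltn_trans _ (finNzRing_gt1 F)).
Qed.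

End Char.
End Gauss.

Lemma prod_expand (R : comRingType) (n : nat) (y : 'I_n -> R) :
  \prod_i (1 + y i) = 1 + \sum_(S : {set 'I_n} | S != set0) \prod_(i in S) y i.
Proof.
under eq_bigr do rewrite addrC.
rewrite bigA_distr /= (bigD1 set0) //=; congr (_ + _).
  by rewrite big1 // => i _; rewrite inE.
apply: eq_bigr => S _; rewrite [RHS]big_mkcond /=.
by apply: eq_bigr => i _; case: (i \in S).
Qed.

Lemma regroup (R : comRingType) (n : nat) (f : {set 'I_n} -> R) :
  \sum_(e < n) \sum_(S : {set 'I_n} | #|S| == (n - e)%N) f S =
  \sum_(S : {set 'I_n} | S != set0) f S.
Proof.
under eq_bigr do rewrite big_mkcond.
rewrite exchange_big /= [RHS]big_mkcond /=; apply: eq_bigr => S _.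
rewrite -big_mkcondr /=.
case: (boolP (S == set0)) => [/eqP-> | S0] /=.
  by rewrite big1 // => e; rewrite cards0; move/eqP; have := ltn_ord e; lia.
have c0 : (0 < #|S|)%N by rewrite card_gt0.
have cn : (#|S| <= n)%N by rewrite -[X in (_ <= X)%N]card_ord max_card.
move: c0 cn; rewrite -[#|S|]/(#|S|).
set k := #|S| => c0 cn.
have en : (n - k < n)%N by lia.
rewrite (bigD1 (Ordinal en)) /=; last by apply/eqP => /=; lia.
rewrite big1 ?addr0 // => e /andP[/eqP h /eqP ne]; exfalso; apply: ne.
apply: val_inj => /=; have := ltn_ord e; lia.
Qed.

Lemma rhs_identity (R : comRingType) (n : nat) (x : 'I_n -> R) (s : R) :
  s * (\sum_(e < n) \sum_(S : {set 'I_n} | #|S| == (n - e)%N)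
        (\prod_(i in S) x i) * s ^+ (n - e - 1)) =
  \prod_i (1 + x i * s) - 1.
Proof.
rewrite prod_expand [1 + _]addrC addrK mulr_sumr -regroup; apply: eq_bigr => e _.
rewrite mulr_sumr; apply: eq_big => // S /eqP hS.
rewrite big_split /= prodr_const mulrCA -exprS; congr (_ * _ ^+ _).
rewrite hS; have := ltn_ord e; lia.
Qed.

Section Chi.
Variable R : rcfType.
Variable F : finFieldType.
Local Notation C := (R[i]).
Local Notation q := #|F|.
Local Notation m := (#|F|.-1).

Lemma q_gt1 : (1 < q)%N. Proof. exact: finNzRing_gt1. Qed.
Lemma m_gt0 : (0 < m)%N.
Proof. by rewrite -ltnS prednK ?q_gt1 // ltnW ?q_gt1. Qed.
Lemma qE : q = m.+1. Proof. by rewrite prednK // ltnW ?q_gt1. Qed.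

Lemma fermat (x : F) : x != 0 -> x ^+ m = 1.
Proof.
move=> x0; apply: (mulIf x0); rewrite mul1r -exprSr -qE expf_card //.
Qed.

Variable g : F.
Hypothesis gprim : m.-primitive_root g.
Variable w : C.
Hypothesis wprim : m.-primitive_root w.

Definition dlog (x : F) : nat :=
  if [pick i : 'I_m | g ^+ i == x] is Some i then (i : nat) else 0%N.

Lemma dlogK x : x != 0 -> g ^+ dlog x = x.
Proof.
move=> x0; have [i xi] := prim_rootP gprim (fermat x0).
rewrite /dlog; case: pickP => [j /eqP //| no].
by have := no i; rewrite xi eqxx.
Qed.

Definition chi (x : F) : C := w ^+ dlog x.

Lemma g_neq0 : g != 0.
Proof. by rewrite (prim_root_eq0 gprim) -lt0n m_gt0. Qed.

Lemma chiM x y : x != 0 -> y != 0 -> chi (x * y) = chi x * chi y.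
Proof.
move=> x0 y0; rewrite /chi -exprD; apply/eqP.
rewrite (eq_prim_root_expr wprim) -(eq_prim_root_expr gprim) exprD !dlogK //.
by rewrite mulf_neq0.
Qed.

Lemma chi_eq x y : x != 0 -> y != 0 -> (chi x == chi y) = (x == y).
Proof.
move=> x0 y0; rewrite /chi (eq_prim_root_expr wprim) -(eq_prim_root_expr gprim).
by rewrite !dlogK.
Qed.

Lemma w_norm : `|w| = 1.
Proof.
apply/eqP; rewrite -(pexpr_eq1 m_gt0) // -normrX (prim_expr_order wprim) normr1 //.
Qed.

Lemma chiN x : `|chi x| = 1.
Proof. by rewrite /chi normrX w_norm expr1n. Qed.

Lemma chi_m x : chi x ^+ m = 1.
Proof. by rewrite /chi -exprM mulnC exprM (prim_expr_order wprim) expr1n. Qed.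

Lemma chi_g : chi g = w.
Proof.
apply/eqP; rewrite /chi -{2}(expr1 w) (eq_prim_root_expr wprim) -(eq_prim_root_expr gprim).
by rewrite dlogK ?g_neq0 // expr1.
Qed.

Lemma chi1 : chi 1 = 1.
Proof. exact: (u1 chiM (fun x _ => chiN x)). Qed.

Lemma chiX x n : x != 0 -> chi (x ^+ n) = chi x ^+ n.
Proof.
move=> x0; elim: n => [|n IH]; first by rewrite !expr0 chi1.
by rewrite !exprS chiM ?expf_neq0 // IH.
Qed.

Lemma chiV x : x != 0 -> chi x ^+ m.-1 = (chi x)^-1.
Proof.
move=> x0; have nz := norm1_neq0 (chiN x).
apply: (mulfI nz); rewrite divff // -exprS prednK ?m_gt0 // chi_m //.
Qed.


Lemma root_sum (z : C) : z ^+ m = 1 -> \sum_(k < m) z ^+ k = if z == 1 then m%:R else 0.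
Proof.
move=> zm; have [->|z1] := eqVneq z 1.
  by under eq_bigr do rewrite expr1n; rewrite sumr_const card_ord.
have : (z - 1) * \sum_(k < m) z ^+ k = 0 by rewrite -subrX1 zm subrr.
by move/eqP; rewrite mulf_eq0 subr_eq0 (negbTE z1) => /eqP.
Qed.

Lemma card_nz : #|[pred x : F | x != 0]| = m.
Proof. by rewrite -(cardC1 (0 : F)); apply: eq_card. Qed.

Lemma sum_nz_const (c : C) : \sum_(x : F | x != 0) c = m%:R * c.
Proof. by rewrite (eq_bigl (fun x => x \in [pred x : F | x != 0])) // sumr_const card_nz mulr_natl. Qed.

Lemma sum_chi j : \sum_(x : F | x != 0) chi x ^+ j = if (m %| j)%N then m%:R else 0.
Proof.
case: ifP => mj.
  have -> : \sum_(x : F | x != 0) chi x ^+ j = \sum_(x : F | x != 0) 1.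
    apply: eq_bigr => x _; case/dvdnP: mj => l ->.
    by rewrite mulnC exprM chi_m expr1n.
  by rewrite sum_nz_const mulr1.
have hM : forall x y, x != 0 -> y != 0 -> chi (x * y) ^+ j = chi x ^+ j * chi y ^+ j.
  by move=> x y x0 y0; rewrite chiM // exprMn.
have hN : forall x, x != 0 -> `|chi x ^+ j| = 1.
  by move=> x _; rewrite normrX chiN expr1n.
have hg : chi g ^+ j != 1 by rewrite chi_g -(prim_order_dvd wprim) mj.
exact: (u_sum0 (u := fun x => chi x ^+ j) hM g_neq0 hg).
Qed.


Variable psi : F -> C.
Hypothesis psiD : forall x y, psi (x + y) = psi x * psi y.
Hypothesis psiN : forall x, `|psi x| = 1.
Variable x0 : F.
Hypothesis psi_nt : psi x0 != 1.

Definition uk (k : nat) (x : F) := chi x ^+ k.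
Lemma ukM k x y : x != 0 -> y != 0 -> uk k (x * y) = uk k x * uk k y.
Proof. by move=> x0' y0; rewrite /uk chiM // exprMn. Qed.
Lemma ukN k x : x != 0 -> `|uk k x| = 1.
Proof. by move=> _; rewrite /uk normrX chiN expr1n. Qed.

Definition H (k : nat) (a : F) := gs psi (uk (m.-1 * k)) a.

Lemma m_neq0C : (m%:R : C) != 0.
Proof. by rewrite pnatr_eq0 -lt0n m_gt0. Qed.

Lemma indicator (d : nat) (t y : F) : t != 0 -> y != 0 ->
  (if t ^+ d == y then 1 else 0 : C) =
     m%:R^-1 * \sum_(k < m) (chi t ^+ d * chi y ^+ m.-1) ^+ k.
Proof.
move=> t0 y0; rewrite root_sum; last first.
  by rewrite exprMn -!exprM !(mulnC _ m) !exprM !chi_m !expr1n mulr1.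
rewrite chiV // -(chiX _ t0) -(chi_eq (expf_neq0 _ t0) y0).
have nz := norm1_neq0 (chiN y).
have -> : (chi (t ^+ d) / chi y == 1) = (chi (t ^+ d) == chi y).
  apply/eqP/eqP => [h|->]; last by rewrite divff.
  by rewrite -[chi y]mul1r -h mulrVK ?unitfE.
by case: eqP; rewrite ?mulr0 // mulVf // m_neq0C.
Qed.

Lemma S_expand (d : nat) (a c : F) : a != 0 -> c != 0 ->
  \sum_(t | t != 0) psi (c * (a * t ^+ d)) =
  \sum_(k < m | (m %| d * k)%N) chi c ^+ k * H k a.
Proof.
move=> a0 c0.
transitivity (\sum_(t | t != 0) \sum_(y | y != 0)
   (if t ^+ d == y then 1 else 0 : C) * psi (c * (a * y))).
  apply: eq_bigr => t t0.
  rewrite (bigD1 (t ^+ d)) /= ?expf_neq0 // eqxx mul1r big1 ?addr0 //.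
  by move=> y /andP[_ ynt]; rewrite eq_sym (negbTE ynt) mul0r.
transitivity (\sum_(t | t != 0) \sum_(y | y != 0) \sum_(k < m)
   m%:R^-1 * (chi t ^+ (d * k) * (chi y ^+ (m.-1 * k) * psi (c * (a * y))))).
  apply: eq_bigr => t t0; apply: eq_bigr => y y0.
  rewrite indicator // -mulrA mulr_suml mulr_sumr; apply: eq_bigr => k _.
  by rewrite exprMn -!exprM !mulrA.
under eq_bigr do rewrite exchange_big /=.
rewrite exchange_big /=.
rewrite [RHS]big_mkcond /=; apply: eq_bigr => k _.
under eq_bigr do rewrite -mulr_sumr -mulr_sumr.
rewrite -mulr_sumr -big_distrl /= sum_chi.
case: ifP => _; last by rewrite mul0r mulr0.
rewrite mulrA mulVf ?m_neq0C // mul1r.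
have hs := gs_scale psi (@ukM (m.-1 * k)) a c0.
have nzu := norm1_neq0 (ukN (m.-1 * k) c0).
rewrite /H -hs mulrA.
have -> : chi c ^+ k * uk (m.-1 * k) c = 1.
  by rewrite /uk -exprD -{1}(mul1n k) -mulnDl add1n prednK ?m_gt0 // exprM chi_m expr1n.
rewrite mul1r /gs; apply: eq_bigr => y _; by rewrite mulrA.
Qed.


Definition sR : R := Num.sqrt (q%:R).
Definition sC : C := real_complex R sR.

Lemma sR_ge0 : 0 <= sR. Proof. exact: sqrtr_ge0. Qed.
Lemma sR2 : sR ^+ 2 = q%:R. Proof. by rewrite sqr_sqrtr ?ler0n. Qed.
Lemma sR_ge1 : 1 <= sR.
Proof. by rewrite /sR -{1}sqrtr1 ler_sqrt ?ler0n // ler1n ltnW ?q_gt1. Qed.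
Lemma sC_ge0 : 0 <= sC. Proof. by rewrite /sC ler0c sR_ge0. Qed.
Lemma sC2 : sC ^+ 2 = q%:R. Proof. by rewrite /sC -rmorphXn /= sR2 rmorph_nat. Qed.
Lemma sC_ge1 : 1 <= sC. Proof. by rewrite /sC -(rmorph1 (real_complex R)) lecR sR_ge1. Qed.

Lemma gs_abs (u : F -> C) (uM : forall x y, x != 0 -> y != 0 -> u (x * y) = u x * u y)
  (uN : forall x, x != 0 -> `|u x| = 1) (z t0 : F) :
  z != 0 -> t0 != 0 -> u t0 != 1 -> `|gs psi u z| = sC.
Proof.
move=> z0 t00 ut0; apply/eqP; rewrite -(eqrXn2 (_ : 0 < 2)%N) ?sC_ge0 //.
by rewrite normCK (gs_norm2 psiD psiN psi_nt uM uN z0 t00 ut0) sC2.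
Qed.

Lemma uk_nt k : ~~ (m %| k)%N -> uk k g != 1.
Proof. by move=> mk; rewrite /uk chi_g -(prim_order_dvd wprim). Qed.

Lemma H_abs k a : a != 0 -> (0 < k < m)%N -> `|H k a| = sC.
Proof.
move=> a0 /andP[k0 km]; apply: (gs_abs (@ukM _) (@ukN _) a0 g_neq0).
apply: uk_nt; rewrite Gauss_dvdr; last by rewrite coprime_sym coprimePn ?m_gt0.
by apply/negP => /(dvdn_leq k0); rewrite leqNgt km.
Qed.

Lemma H0 a : a != 0 -> H 0 a = -1.
Proof.
move=> a0; rewrite /H /gs muln0.
under eq_bigr do rewrite /uk expr0 mul1r.
exact: (psi_sum_nz psiD psiN psi_nt a0).
Qed.

Lemma W_bound k z : z != 0 -> `|gs psi (uk k) z| <= sC.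
Proof.
move=> z0; have [mk|mk] := boolP (m %| k)%N; last first.
  by rewrite (gs_abs (@ukM _) (@ukN _) z0 g_neq0 (uk_nt mk)).
rewrite /gs.
have -> : \sum_(x | x != 0) uk k x * psi (z * x) = \sum_(x | x != 0) psi (z * x).
  apply: eq_bigr => x _; case/dvdnP: mk => l ->.
  by rewrite /uk mulnC exprM chi_m expr1n mul1r.
by rewrite (psi_sum_nz psiD psiN psi_nt z0) normrN normr1 sC_ge1.
Qed.


Lemma psi0' : psi 0 = 1. Proof. exact: psi0 psiD psiN. Qed.

Lemma psi_sum_big (I : finType) (f : I -> F) : psi (\sum_i f i) = \prod_i psi (f i).
Proof. exact: (big_morph psi psiD psi0'). Qed.

Lemma count_formula (n : nat) (d : 'I_n -> nat) (a : 'I_n -> F) (b : F) :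
  q%:R * ((Nstar d a b)%:R : C) = m%:R ^+ n +
    \sum_(c | c != 0) psi (- (c * b)) *
       \prod_i \sum_(t | t != 0) psi (c * (a i * t ^+ d i)).
Proof.
rewrite /Nstar -sum1_card natr_sum.
transitivity (\sum_(x : {ffun 'I_n -> F} | [forall i, x i != 0])
   \sum_(c : F) psi (- (c * b)) * \prod_i psi (c * (a i * x i ^+ d i))).
  rewrite big_mkcond /= mulr_sumr [RHS]big_mkcond /=; apply: eq_bigr => x _.
  rewrite inE; case: ([forall i, x i != 0]) => /=; last by rewrite mulr0.
  transitivity (if \sum_(i < n) a i * x i ^+ d i - b == 0 then q%:R else 0 : C).
    by rewrite subr_eq0; case: ifP; rewrite ?mulr1 ?mulr0.
  rewrite -(psi_sum_all psiD psiN psi_nt); apply: eq_bigr => c _.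
  rewrite mulrC mulrBr psiD mulrC -psi_sum_big mulr_sumr.
  by congr (psi _ * psi _); rewrite mulrN.
rewrite exchange_big /=.
transitivity (\sum_(c : F) psi (- (c * b)) *
       \prod_i \sum_(t | t != 0) psi (c * (a i * t ^+ d i))).
  apply: eq_bigr => c _; rewrite -mulr_sumr; congr (_ * _).
  rewrite (bigA_distr_big (fun t : F => t != 0)); apply: eq_bigl => x.
  by apply/forallP/familyP => h i; have := h i.
rewrite (bigD1 0) //=; congr (_ + _).
rewrite mul0r oppr0 psi0' mul1r (eq_bigr (fun _ => m%:R)) => [|i _].
  by rewrite prodr_const card_ord.
under eq_bigr do rewrite mul0r psi0'.
by rewrite sum_nz_const mulr1.
Qed.


Definition k0 : 'I_m := Ordinal m_gt0.
Definition Kp (d : nat) : pred 'I_m := fun k => (m %| d * k)%N.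

Lemma prod_S (n : nat) (d : 'I_n -> nat) (a : 'I_n -> F) (c : F) :
  (forall i, a i != 0) -> c != 0 ->
  \prod_i \sum_(t | t != 0) psi (c * (a i * t ^+ d i)) =
  \sum_(kk in family (fun i => Kp (d i)))
      chi c ^+ (\sum_i (kk i : nat)) * \prod_i H (kk i) (a i).
Proof.
move=> ha c0.
rewrite (eq_bigr (fun i => \sum_(k | Kp (d i) k) chi c ^+ k * H k (a i))); last first.
  by move=> i _; rewrite S_expand.
rewrite bigA_distr_big_dep; apply: eq_bigr => kk _.
by rewrite big_split /= prodrXr.
Qed.

Definition W (k : nat) (b : F) := gs psi (uk k) (- b).

Lemma count_formula2 (n : nat) (d : 'I_n -> nat) (a : 'I_n -> F) (b : F) :
  (forall i, a i != 0) ->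
  q%:R * ((Nstar d a b)%:R : C) = m%:R ^+ n +
    \sum_(kk in family (fun i => Kp (d i)))
        (\prod_i H (kk i) (a i)) * W (\sum_i (kk i : nat)) b.
Proof.
move=> ha; rewrite count_formula; congr (_ + _).
under eq_bigr => c c0 do rewrite prod_S // mulr_sumr.
rewrite exchange_big /=; apply: eq_bigr => kk _.
rewrite /W /gs mulr_sumr; apply: eq_bigr => c _.
have -> : psi (- b * c) = psi (- (c * b)) by rewrite mulNr mulrC.
by rewrite /uk; ring.
Qed.


Definition wt (k : nat) : C := if k == 0%N then 1 else sC.
Definition Kstar (d : nat) : pred 'I_m := fun k => (k != k0) && Kp d k.

Lemma sum_pred_const (T : finType) (P : pred T) (c : C) :
  \sum_(x | P x) c = #|P|%:R * c.
Proof. by rewrite (eq_bigl (fun x => x \in P)) // sumr_const mulr_natl. Qed.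

Lemma P_abs (n : nat) (d : 'I_n -> nat) (a : 'I_n -> F) (kk : {ffun 'I_n -> 'I_m}) :
  (forall i, a i != 0) ->
  `|\prod_i H (kk i) (a i)| = \prod_i wt (kk i).
Proof.
move=> ha; rewrite normr_prod; apply: eq_bigr => i _.
rewrite /wt; case: eqP => [->|/eqP k0n]; first by rewrite H0 ?normrN ?normr1.
by rewrite H_abs // lt0n k0n ltn_ord.
Qed.

Lemma sum_wt (n : nat) (d : 'I_n -> nat) :
  \sum_(kk in family (fun i => Kp (d i))) \prod_i wt (kk i) =
  \prod_i (1 + #|Kstar (d i)|%:R * sC).
Proof.
rewrite -(bigA_distr_big_dep (fun i => Kp (d i)) (fun (i : 'I_n) (k : 'I_m) => wt k)); apply: eq_bigr => i _.
rewrite (bigD1 k0) /=; last by rewrite /Kp muln0 dvdn0.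
rewrite /wt eqxx; congr (_ + _).
rewrite -sum_pred_const; apply: eq_big => [k|k /andP[_ kk0]].
  by rewrite /Kstar andbC.
suff -> : ((k : nat) == 0%N) = false by [].
by apply/negbTE; apply: contra kk0 => /eqP h; apply/eqP/val_inj.
Qed.

Lemma W0 b : b != 0 -> W 0 b = -1.
Proof.
move=> b0; rewrite /W /gs.
under eq_bigr do rewrite /uk expr0 mul1r.
by rewrite (psi_sum_nz psiD psiN psi_nt) // oppr_eq0.
Qed.

Lemma main_C (n : nat) (d : 'I_n -> nat) (a : 'I_n -> F) (b : F) :
  (forall i, a i != 0) -> b != 0 ->
  `|q%:R * ((Nstar d a b)%:R : C) - (m%:R ^+ n - (-1) ^+ n)| <=
     sC * (\prod_i (1 + #|Kstar (d i)|%:R * sC) - 1).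
Proof.
move=> ha hb.
pose kk0 : {ffun 'I_n -> 'I_m} := [ffun _ => k0].
have kk0E : forall i, kk0 i = k0 by move=> i; rewrite /kk0 ffunE.
have kk0f : kk0 \in family (fun i => Kp (d i)).
  by apply/familyP => i; rewrite kk0E /= unfold_in /Kp muln0 dvdn0.
rewrite count_formula2 // (bigD1 kk0) //=.
have -> : \prod_i H (kk0 i) (a i) * W (\sum_i (kk0 i : nat)) b = - (-1) ^+ n.
  under eq_bigr do rewrite kk0E.
  have -> : (\sum_i (kk0 i : nat) = 0)%N by rewrite big1 // => i _; rewrite kk0E.
  rewrite W0 // (eq_bigr (fun _ => -1)) => [|i _]; last exact: H0.
  by rewrite prodr_const card_ord mulrN1.
set Rest := \sum_(kk | _) _.
have -> : m%:R ^+ n + (- (-1) ^+ n + Rest) - (m%:R ^+ n - (-1) ^+ n) = Rest by ring.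
apply: (le_trans (ler_norm_sum _ _ _)).
apply: (@le_trans _ _ (\sum_(kk | (kk \in family (fun i => Kp (d i))) && (kk != kk0))
         sC * \prod_i wt (kk i))).
  apply: ler_sum => kk _; rewrite normrM P_abs // mulrC.
  apply: ler_wpM2r; first by apply: prodr_ge0 => i _; rewrite /wt; case: eqP => _; [exact: ler01 | exact: sC_ge0].
  by rewrite /W; apply: W_bound; rewrite oppr_eq0.
rewrite -mulr_sumr; apply: ler_wpM2l; first exact: sC_ge0.
rewrite -sum_wt [in X in _ <= X](bigD1 kk0) //=.
have -> : \prod_i wt (kk0 i) = 1.
  by rewrite big1 // => i _; rewrite kk0E /wt eqxx.
by rewrite addrC addrK.
Qed.

End Chi.

Lemma card_Kstar (F : finFieldType) (d : nat) : (0 < d)%N -> (#|@Kstar F d| <= d.-1)%N.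
Proof.
case: d => // d' _ /=.
set m := #|F|.-1.
have m0 : (0 < m)%N := m_gt0 F.
pose f (k : 'I_m) : 'I_d'.+1 := inord (d'.+1 * k %/ m).
have fK : forall k : 'I_m, (d'.+1 * k %/ m < d'.+1)%N.
  move=> k; rewrite ltn_divLR // ltn_pmul2l //.
have inj : {in Kstar (F:=F) d'.+1 &, injective f}.
  move=> k1 k2; rewrite /Kstar /Kp !unfold_in /= => /andP[_ h1] /andP[_ h2].
  rewrite /f => /(congr1 val); rewrite /= !inordK // => e.
  apply: val_inj => /=; apply/eqP; rewrite -(eqn_pmul2l (ltn0Sn d')).
  by rewrite -(divnK h1) -(divnK h2) e.
rewrite -(card_in_imset inj).
have cd : #|[set j : 'I_d'.+1 | j != ord0]| = d'.
  by rewrite cardsE cardC1 card_ord.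
rewrite -[X in (_ <= X)%N]cd.
apply: subset_leq_card; apply/subsetP => _ /imsetP[k hk ->].
rewrite inE; move: hk; rewrite unfold_in /Kstar /Kp => /andP[kn0 hk].
apply/eqP => /(congr1 val); rewrite /f /= inordK //.
have k0' : (0 < k)%N.
  rewrite lt0n; apply: contra kn0 => /eqP h; apply/eqP/val_inj => /=; rewrite h.
  by [].
have : (m <= d'.+1 * k)%N by apply: dvdn_leq => //; rewrite muln_gt0.
by move=> hle h0; move: hle; rewrite -(divn_gt0 _ m0) h0.
Qed.

Lemma addchar_exists (R : rcfType) (F : finFieldType) :
  exists psi : F -> R[i], (forall x y, psi (x + y) = psi x * psi y) /\
    (forall x, `|psi x| = 1) /\ exists x0, psi x0 != 1.
Proof.
have [p pr_p pcharFp] := finPcharP F.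
pose V := pPrimeCharType pcharFp.
have dim_gt0 : (0 < \dim {: V : vectType 'F_p})%N.
  rewrite lt0n dimv_eq0; apply/negP => /eqP h.
  have : (1 : V) \in {: V : vectType 'F_p}%VS by rewrite memvf.
  by rewrite h memv0 oner_eq0.
pose e := vbasis {: V : vectType 'F_p}.
pose i0 : 'I_(\dim {: V : vectType 'F_p}) := Ordinal dim_gt0.
pose N := (Zp_trunc (pdiv p)).+2.
have [z zprim] := Cprim R (ltn0Sn (Zp_trunc (pdiv p)).+1).
pose f (x : F) : 'F_p := coord e i0 (x : V).
exists (fun x => z ^+ (f x : nat)); split; [|split].
- move=> x y; rewrite -exprD -[RHS](prim_expr_mod zprim).
  have -> : f (x + y) = f x + f y by rewrite /f (linearD (coord e i0)).
  by [].
- move=> x; rewrite normrX.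
  suff -> : `|z| = 1 by rewrite expr1n.
  apply/eqP; rewrite -(pexpr_eq1 (ltn0Sn (Zp_trunc (pdiv p)).+1)) //.
  by rewrite -normrX (prim_expr_order zprim) normr1.
- exists (e`_i0 : V); rewrite /f coord_free; last exact: (basis_free (vbasisP _)).
  rewrite eqxx /=.
  apply/negP => /eqP; rewrite modn_small // => h.
  have : (N %| 1)%N by rewrite (prim_order_dvd zprim) h.
  by rewrite dvdn1.
Qed.

Lemma normC_real (R : rcfType) (x : R) : `|real_complex R x| = real_complex R `|x|.
Proof. by rewrite normc_def /= expr0n addr0 sqrtr_sqr. Qed.

Theorem mainTheorem7 (R : rcfType) (F : finFieldType) (n : nat)
    (d : 'I_n -> nat) (a : 'I_n -> F) (b : F)
    (hd : forall i, (0 < d i)%N) (ha : forall i, a i != 0) (hb : b != 0) :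
  let q := #|F| in
  `| (Nstar d a b)%:R - (((q%:R - 1) ^+ n - (-1) ^+ n) / q%:R : R) |
  <= \sum_(e < n) \sum_(S : {set 'I_n} | #|S| == (n - e)%N)
        (\prod_(i in S) ((d i)%:R - 1)) * Num.sqrt (q%:R) ^+ (n - e - 1).
Proof.
cbv zeta.
have [g gprim] := Fprim F.
have [w wprim] := Cprim R (m_gt0 F).
have [psi [psiD [psiN [x0 psi_nt]]]] := addchar_exists R F.
have hC := main_C gprim wprim psiD psiN psi_nt d ha hb.
set m := #|F|.-1 in hC.
set N := Nstar d a b in hC *.
pose ER : R := #|F|%:R * N%:R - (m%:R ^+ n - (-1) ^+ n).
pose BR : R := sR R F * (\prod_i (1 + #|@Kstar F (d i)|%:R * sR R F) - 1).
have hR : `|ER| <= BR.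
  rewrite -(lecR (R := R)) -normC_real.
  suff -> : real_complex R ER = #|F|%:R * (N%:R : R[i]) - (m%:R ^+ n - (-1) ^+ n).
    suff -> : real_complex R BR = sC R F * (\prod_i (1 + #|@Kstar F (d i)|%:R * sC R F) - 1).
      exact: hC.
    by rewrite /BR /sC rmorphM rmorphB rmorph_prod rmorph1 /=; congr (_ * (_ - _));
       apply: eq_bigr => i _; rewrite rmorphD rmorph1 rmorphM rmorph_nat.
  by rewrite /ER rmorphB rmorphM !rmorph_nat rmorphB rmorphXn rmorph_nat rmorphXn rmorphN rmorph1.
have q0 : (0 : R) < #|F|%:R by rewrite ltr0n ltnW ?q_gt1.
have mE : (#|F|%:R - 1 : R) = m%:R by rewrite /m (qE F) -natr1 addrK.
rewrite mE.
have -> : N%:R - (m%:R ^+ n - (-1) ^+ n) / #|F|%:R = ER / #|F|%:R.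
  by rewrite /ER; field; exact: lt0r_neq0 q0.
rewrite normrM normfV (gtr0_norm q0) ler_pdivrMr //.
apply: (le_trans hR).
have hid := rhs_identity (fun i => (d i)%:R - 1 : R) (sR R F).
rewrite /= /sR in hid.
set RHS := \sum_(e < n) _.
have -> : RHS * #|F|%:R = sR R F * (sR R F * RHS) by rewrite mulrA -expr2 sR2 mulrC.
rewrite /RHS {2}/sR hid /BR.
apply: ler_wpM2l; first exact: sR_ge0.
apply: lerB => //; apply: ler_prod => i _; apply/andP; split.
  by rewrite addr_ge0 // mulr_ge0 ?ler0n ?sR_ge0.
rewrite lerD2l ler_wpM2r ?sR_ge0 //.
have := card_Kstar F (hd i).
rewrite -(ler_nat R) => h; apply: (le_trans h).
by rewrite -{2}(prednK (hd i)) -natr1 addrK.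
Qed.
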